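(* Let $N,T\ge1$. Let $\bar{\boldsymbol{\Psi}}_{\mathrm{id}}=\mathrm{diag}(\bar\psi_{\mathrm{id},1},\dots,\bar\psi_{\mathrm{id},N})$ with all $\bar\psi_{\mathrm{id},i}>0$, let $\bar\psi_{\mathrm{f},1}>0$, let $\mathbf{w}_1\in\mathbb{R}^N\setminus\{\mathbf{0}\}$, let $\theta\in[0,1]$, and let $\alpha_1,\dots,\alpha_T>0$, $\beta_1,\dots,\beta_T>0$ with $\sum_t\alpha_t=\sum_t\beta_t=1$. For a nonzero $\mathbf{x}_0\in\mathbb{R}^N$ define $$\Upsilon(\mathbf{x}_0)=\frac{\sum_{t=1}^T(\alpha_t(1-\theta)+\beta_t\theta)^2\,\mathbf{x}_0^\top\left(\alpha_t\bar{\boldsymbol{\Psi}}_{\mathrm{id}}+\beta_t\bar\psi_{\mathrm{f},1}\mathbf{w}_1\mathbf{w}_1^\top\right)^{-1}\mathbf{x}_0}{\mathbf{x}_0^\top\left(\bar{\boldsymbol{\Psi}}_{\mathrm{id}}+\bar\psi_{\mathrm{f},1}\mathbf{w}_1\mathbf{w}_1^\top\right)^{-1}\mathbf{x}_0}.$$ Let $\gamma_t=\beta_t/\alpha_t$, $\eta_1=\bar\psi_{\mathrm{f},1}\mathbf{w}_1^\top\bar{\boldsymbol{\Psi}}_{\mathrm{id}}^{-1}\mathbf{w}_1$, and $\Delta=\sum_{t=1}^T\frac{\alpha_t(1-\theta(1-\gamma_t))^2(1-\gamma_t)}{1+\eta_1\gamma_t}$. Then $$\Upsilon(\mathbf{x}_0)=1+\theta^2\Big(\sum_{t=1}^T\frac{\beta_t^2}{\alpha_t}-1\Big)+\Delta\cdot\left(\frac{\mathbf{x}_0^\top\bar{\boldsymbol{\Psi}}_{\mathrm{id}}^{-1}\mathbf{x}_0}{(\mathbf{w}_1^\top\bar{\boldsymbol{\Psi}}_{\mathrm{id}}^{-1}\mathbf{x}_0)^2}\cdot\frac{1+\eta_1}{\bar\psi_{\mathrm{f},1}}-1\right)^{-1},$$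 where the last term is interpreted as $0$ when $\mathbf{w}_1^\top\bar{\boldsymbol{\Psi}}_{\mathrm{id}}^{-1}\mathbf{x}_0=0$.
   Context: Single index fund setting: time-$t$ price impact matrix $\mathbf{G}_t=\left(\alpha_t\bar{\boldsymbol{\Psi}}_{\mathrm{id}}+\beta_t\bar\psi_{\mathrm{f},1}\mathbf{w}_1\mathbf{w}_1^\top\right)^{-1}$, expected cost of a schedule $(\mathbf{v}_t)$ is $\sum_t\tfrac12\mathbf{v}_t^\top\mathbf{G}_t\mathbf{v}_t$. The numerator of $\Upsilon$ (times $\tfrac12$) is the cost of the separable schedule $\mathbf{v}_t^{\mathrm{sep}}=(\alpha_t(1-\theta)+\beta_t\theta)\mathbf{x}_0$, and the denominator (times $\tfrac12$) is the minimal cost of liquidating $\mathbf{x}_0$ subject to $\sum_t\mathbf{v}_t=\mathbf{x}_0$. $\theta$ is the fraction of traded volume attributable to index-fund investors. *)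

(* Defs.v *)
From mathcomp Require Import all_boot all_order all_algebra.
Set Implicit Arguments. Unset Strict Implicit. Unset Printing Implicit Defensive.
Import Order.TTheory GRing.Theory Num.Theory.
Local Open Scope ring_scope.

Definition qform (R : comNzRingType) (N : nat) (x : 'cV[R]_N) (A : 'M[R]_N)
  (y : 'cV[R]_N) : R := (x^T *m A *m y) ord0 ord0.

Definition Psi_id (R : comNzRingType) (N : nat) (psi : 'I_N -> R) : 'M[R]_N :=
  diag_mx (\row_i psi i).

Definition Gmat (R : comUnitRingType) (N : nat) (psi : 'I_N -> R) (psif : R)
  (w : 'cV[R]_N) (a b : R) : 'M[R]_N :=
  invmx (a *: Psi_id psi + (b * psif) *: (w *m w^T)).

Definition Upsilon (R : fieldType) (N T : nat) (psi : 'I_N -> R) (psif : R)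
  (w : 'cV[R]_N) (theta : R) (alpha beta : 'I_T -> R) (x0 : 'cV[R]_N) : R :=
  (\sum_(t < T) (alpha t * (1 - theta) + beta t * theta) ^+ 2
       * qform x0 (Gmat psi psif w (alpha t) (beta t)) x0)
  / qform x0 (Gmat psi psif w 1 1) x0.

(* Main.v *)
Require Import Defs.
From mathcomp Require Import all_boot all_order all_algebra.
From mathcomp Require Import ring lra.
Import Order.TTheory GRing.Theory Num.Theory.
Local Open Scope ring_scope.

Lemma invmx_right (R : comUnitRingType) n (A B : 'M[R]_n) :
  A *m B = 1%:M -> invmx A = B.
Proof.
move=> AB; have [uA _] := mulmx1_unit AB.
by rewrite -[invmx A]mulmx1 -AB mulmxA mulVmx // mul1mx.
Qed.

Section Q.
Variable R : fieldType.
Variable N : nat.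
Implicit Types (x y : 'cV[R]_N) (A B : 'M[R]_N).

Lemma qformD x A B y : qform x (A + B) y = qform x A y + qform x B y.
Proof. by rewrite /qform mulmxDr mulmxDl mxE. Qed.
Lemma qformB x A B y : qform x (A - B) y = qform x A y - qform x B y.
Proof. by rewrite /qform mulmxBr mulmxBl mxE !mxE. Qed.
Lemma qformZ x k A y : qform x (k *: A) y = k * qform x A y.
Proof. by rewrite /qform -scalemxAr -scalemxAl mxE. Qed.
Lemma qform_rank1 x A u y :
  qform x (A *m u *m (u^T *m A)) y = qform x A u * qform u A y.
Proof.
rewrite /qform !mulmxA.
have -> : x^T *m A *m u *m u^T *m A *m y = (x^T *m A *m u) *m (u^T *m A *m y).
  by rewrite !mulmxA.
by rewrite mxE big_ord1.
Qed.
End Q.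

Lemma sherman (R : fieldType) N (P A : 'M[R]_N) (w : 'cV[R]_N) (a b f : R) :
  P *m A = 1%:M -> a != 0 -> a + b * f * qform w A w != 0 ->
  invmx (a *: P + (b * f) *: (w *m w^T)) =
  a^-1 *: A - (b * f / (a * (a + b * f * qform w A w))) *: (A *m w *m (w^T *m A)).
Proof.
move=> PA a0 d0; apply: invmx_right.
set s := qform w A w; set k := b * f / _; set W := w *m (w^T *m A).
have h1 : P *m (A *m w *m (w^T *m A)) = W by rewrite !mulmxA PA mul1mx /W mulmxA.
have h2 : w *m w^T *m A = W by rewrite /W mulmxA.
have h3 : w *m w^T *m (A *m w *m (w^T *m A)) = s *: W.
  have -> : w *m w^T *m (A *m w *m (w^T *m A)) = w *m (w^T *m A *m w) *m (w^T *m A).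
    by rewrite !mulmxA.
  by rewrite [w^T *m A *m w]mx11_scalar mul_mx_scalar -scalemxAl /W.
rewrite mulmxDl !mulmxBr -!scalemxAl -!scalemxAr !scalerA PA h1 h2 h3 scalerA.
rewrite mulfV // scale1r.
have hc : - (a * k) + b * f * a^-1 - b * f * k * s = 0.
  rewrite /k; field; apply/andP; split => //.
by rewrite -scalerBl -scaleNr -addrA -scalerDl addrA hc scale0r addr0.
Qed.

Section Scal.
Variable R : realFieldType.

Lemma sumS T (alpha beta : 'I_T -> R) (th : R) :
  (forall t, alpha t != 0) ->
  \sum_(t < T) alpha t = 1 -> \sum_(t < T) beta t = 1 ->
  \sum_(t < T) (alpha t * (1 - th) + beta t * th) ^+ 2 / alpha t =
  1 + th ^+ 2 * (\sum_(t < T) beta t ^+ 2 / alpha t - 1).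
Proof.
move=> ha sa sb.
rewrite (eq_bigr (fun t => (1 - th) ^+ 2 * alpha t + (2 * (1 - th) * th) * beta t
   + th ^+ 2 * (beta t ^+ 2 / alpha t))); last first.
  by move=> t _; field.
rewrite !big_split /= -!mulr_sumr sa sb; ring.
Qed.

Lemma scalar_main T (alpha beta : 'I_T -> R) (th q c s f : R) :
  (forall t, 0 < alpha t) -> (forall t, 0 < beta t) ->
  \sum_(t < T) alpha t = 1 -> \sum_(t < T) beta t = 1 ->
  0 < q -> 0 < s -> 0 < f -> c ^+ 2 <= q * s ->
  (\sum_(t < T) (alpha t * (1 - th) + beta t * th) ^+ 2 *
     ((alpha t)^-1 * q - beta t * f / (alpha t * (alpha t + beta t * f * s)) * (c * c)))
  / (1 ^-1 * q - 1 * f / (1 * (1 + 1 * f * s)) * (c * c)) =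
  1 + th ^+ 2 * (\sum_(t < T) beta t ^+ 2 / alpha t - 1)
      + (if c == 0 then 0
         else (\sum_(t < T)
      alpha t * (1 - th * (1 - beta t / alpha t)) ^+ 2 * (1 - beta t / alpha t)
        / (1 + f * s * (beta t / alpha t))) * (q / c ^+ 2 * ((1 + f * s) / f) - 1)^-1).
Proof.
move=> ha hb sa sb q0 s0 f0 cs.
have a0 t : alpha t != 0 by rewrite gt_eqF.
have fs0 : 0 < f * s by rewrite mulr_gt0.
have e0 : 1 + f * s != 0 by rewrite gt_eqF //; lra.
have ab0 t : alpha t + beta t * f * s != 0.
  have := ha t; have : 0 < beta t * f * s by rewrite !mulr_gt0.
  by move=> *; rewrite gt_eqF //; lra.
have ag0 t : 1 + f * s * (beta t / alpha t) != 0.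
  have : 0 < f * s * (beta t / alpha t) by rewrite !mulr_gt0 // invr_gt0.
  by move=> *; rewrite gt_eqF //; lra.
have D0 : 0 < 1 ^-1 * q - 1 * f / (1 * (1 + 1 * f * s)) * (c * c).
  rewrite invr1 !mul1r.
  have -> : q - f / (1 + f * s) * (c * c) = (q + f * (q * s - c ^+ 2)) / (1 + f * s).
    by field.
  apply: divr_gt0; last lra.
  have : 0 <= f * (q * s - c ^+ 2) by apply: mulr_ge0; [exact: ltW | rewrite subr_ge0].
  lra.
rewrite -(sumS _ _ _ th (fun t => a0 t) sa sb).
rewrite (eq_bigr (fun t => q * ((alpha t * (1 - th) + beta t * th) ^+ 2 / alpha t)
   - f * (c * c) / (1 + f * s) * ((alpha t * (1 - th) + beta t * th) ^+ 2 / alpha t)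
   + f * (c * c) / (1 + f * s) *
     (alpha t * (1 - th * (1 - beta t / alpha t)) ^+ 2 * (1 - beta t / alpha t)
        / (1 + f * s * (beta t / alpha t))))); last first.
  move=> t _; field.
  rewrite a0 e0 andbT /=.
  by have -> : alpha t + f * s * beta t = alpha t + beta t * f * s by ring.
rewrite !big_split /= sumrN -!mulr_sumr.
set SS := \sum_(t < T) _ ^+ 2 / _.
set Dl := \sum_(t < T) _ * _ ^+ 2 * _ / _.
move: D0; set D := 1^-1 * q - _ => D0.
have DE : D = q - f * (c * c) / (1 + f * s) by rewrite /D; field.
have Dn : D != 0 by rewrite gt_eqF.
have fn : f != 0 by rewrite gt_eqF.
have [c0|cn] := eqVneq c 0.
  rewrite DE c0 addr0; field.
  by rewrite e0 gt_eqF.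
have -> : q / c ^+ 2 * ((1 + f * s) / f) - 1 = D * (1 + f * s) / (f * c ^+ 2).
  by rewrite DE; field; rewrite cn fn e0.
have Dn2 : q * (1 + f * s) - f * (c * c) != 0.
  have -> : q * (1 + f * s) - f * (c * c) = D * (1 + f * s) by rewrite DE; field.
  by rewrite mulf_neq0.
rewrite DE; field.
by rewrite cn fn e0 Dn2.
Qed.
End Scal.

Lemma qform_diag (R : comNzRingType) N (x y : 'cV[R]_N) (d : 'rV[R]_N) :
  qform x (diag_mx d) y = \sum_i x i 0 * d 0 i * y i 0.
Proof.
rewrite /qform mul_mx_diag mxE; apply: eq_bigr => i _; by rewrite !mxE.
Qed.

Lemma pos_quad (R : realFieldType) N (psi : 'I_N -> R) (v : 'cV[R]_N) :
  (forall i, 0 < psi i) -> v != 0 -> 0 < \sum_i v i 0 * (psi i)^-1 * v i 0.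
Proof.
move=> hp vn.
have h i : 0 <= v i 0 * (psi i)^-1 * v i 0.
  rewrite mulrAC -expr2; apply: mulr_ge0; [exact: sqr_ge0 | by rewrite ltW // invr_gt0].
have hs : 0 <= \sum_i v i 0 * (psi i)^-1 * v i 0 by apply: sumr_ge0 => i _; exact: h.
rewrite lt_def hs andbT eq_sym; apply/negP => /eqP Hs; have H := psumr_eq0P (fun k _ => h k) (esym Hs).
move/negP: vn; apply; apply/eqP/matrixP => k j.
rewrite (ord1 j) mxE; have := H k isT.
rewrite mulrAC -expr2 => /eqP; rewrite mulf_eq0 invr_eq0 (gt_eqF (hp k)) orbF.
by rewrite sqrf_eq0 => /eqP.
Qed.

Lemma cauchy (R : realFieldType) N (psi : 'I_N -> R) (x w : 'cV[R]_N) :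
  (forall i, 0 < psi i) ->
  let q := \sum_i x i 0 * (psi i)^-1 * x i 0 in
  let s := \sum_i w i 0 * (psi i)^-1 * w i 0 in
  let c := \sum_i w i 0 * (psi i)^-1 * x i 0 in
  0 < s -> c ^+ 2 <= q * s.
Proof.
move=> hp q s c s0.
have h i (y : R) : 0 <= y * (psi i)^-1 * y.
  rewrite mulrAC -expr2; apply: mulr_ge0; [exact: sqr_ge0 | by rewrite ltW // invr_gt0].
have : 0 <= \sum_i (x i 0 * s - c * w i 0) * (psi i)^-1 * (x i 0 * s - c * w i 0).
  by apply: sumr_ge0 => i _; exact: h.
rewrite (eq_bigr (fun i => s ^+ 2 * (x i 0 * (psi i)^-1 * x i 0)
   - (2 * s * c) * (w i 0 * (psi i)^-1 * x i 0) + c ^+ 2 * (w i 0 * (psi i)^-1 * w i 0))); last first.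
  by move=> i _; ring.
rewrite big_split sumrB /= -!mulr_sumr -/q -/s -/c => H.
have : 0 <= s * (q * s - c ^+ 2).
  have -> : s * (q * s - c ^+ 2) = s ^+ 2 * q - 2 * s * c * c + c ^+ 2 * s by ring.
  exact: H.
by rewrite pmulr_rge0 // subr_ge0.
Qed.

Theorem proposition5 (R : realFieldType) (N T : nat)
  (hN : (1 <= N)%N) (hT : (1 <= T)%N)
  (psi : 'I_N -> R) (hpsi : forall i, 0 < psi i)
  (psif : R) (hpsif : 0 < psif)
  (w : 'cV[R]_N) (hw : w != 0)
  (theta : R) (htheta0 : 0 <= theta) (htheta1 : theta <= 1)
  (alpha beta : 'I_T -> R)
  (halpha : forall t, 0 < alpha t) (hbeta : forall t, 0 < beta t)
  (hsa : \sum_(t < T) alpha t = 1) (hsb : \sum_(t < T) beta t = 1)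
  (x0 : 'cV[R]_N) (hx0 : x0 != 0) :
  let Pinv := invmx (Psi_id psi) in
  let gamma := fun t => beta t / alpha t in
  let eta1 := psif * qform w Pinv w in
  let Delta := \sum_(t < T)
      alpha t * (1 - theta * (1 - gamma t)) ^+ 2 * (1 - gamma t)
        / (1 + eta1 * gamma t) in
  let c := qform w Pinv x0 in
  Upsilon psi psif w theta alpha beta x0 =
    1 + theta ^+ 2 * (\sum_(t < T) beta t ^+ 2 / alpha t - 1)
      + (if c == 0 then 0
         else Delta * (qform x0 Pinv x0 / c ^+ 2 * ((1 + eta1) / psif) - 1)^-1).
Proof.
move=> Pinv gamma eta1 Delta c.
have pn i : psi i != 0 by rewrite gt_eqF.
have PA : Psi_id psi *m diag_mx (\row_i (psi i)^-1) = 1%:M.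
  rewrite /Psi_id mulmx_diag -diag_const_mx; congr diag_mx; apply/rowP => i.
  by rewrite !mxE mulfV.
have PE : Pinv = diag_mx (\row_i (psi i)^-1) by rewrite /Pinv (@invmx_right _ _ _ _ PA).
rewrite -PE in PA.
have qE x y : qform x Pinv y = \sum_i x i 0 * (psi i)^-1 * y i 0.
  by rewrite PE qform_diag; apply: eq_bigr => i _; rewrite mxE.
have q0 : 0 < qform x0 Pinv x0 by rewrite qE; exact: pos_quad.
have s0 : 0 < qform w Pinv w by rewrite qE; exact: pos_quad.
have cE : qform x0 Pinv w = c by rewrite /c !qE; apply: eq_bigr => i _; ring.
have cs : c ^+ 2 <= qform x0 Pinv x0 * qform w Pinv w.
  have := @cauchy _ _ psi x0 w hpsi; rewrite /c !qE; apply; rewrite -qE //.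
have GE a b : 0 < a -> 0 < b -> qform x0 (Gmat psi psif w a b) x0 =
    a^-1 * qform x0 Pinv x0
    - b * psif / (a * (a + b * psif * qform w Pinv w)) * (c * c).
  move=> a0 b0; rewrite /Gmat (@sherman _ _ _ Pinv) //; last first.
  - have : 0 < b * psif * qform w Pinv w by rewrite !mulr_gt0.
    by move=> *; rewrite gt_eqF //; lra.
  - by rewrite gt_eqF.
  by rewrite qformB !qformZ qform_rank1 cE.
rewrite /Upsilon.
under eq_bigr do rewrite GE //.
rewrite GE ?ltr01 //.
rewrite /Delta /gamma /eta1.
exact: scalar_main.
Qed.
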